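(* Let $f$ be a homeomorphism of a compact metric space $X$ and suppose $f|_{\Omega(f)}$ is expansive with expansivity constant $c>0$. Then $W^s_c(x)\subset W^s(x)$ and $W^u_c(x)\subset W^u(x)$ for every $x\in X$.
   Context: $\Omega(f)$ is the non-wandering set. $c>0$ is an expansivity constant of $f|_{\Omega(f)}$ if for all distinct $x,y\in\Omega(f)$ there is $n\in\mathbb{Z}$ with $d(f^n(x),f^n(y))>c$. $W^s_c(x)=\{y: d(f^n(x),f^n(y))\le c\ \forall n\ge0\}$, $W^u_c(x)=\{y: d(f^{-n}(x),f^{-n}(y))\le c\ \forall n\ge0\}$, $W^s(x)=\{y: d(f^n(x),f^n(y))\to0\ (n\to+\infty)\}$, $W^u(x)=\{y: d(f^{-n}(x),f^{-n}(y))\to0\ (n\to+\infty)\}$. *)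

(* Defs.v *)
From Stdlib Require Import Reals List ZArith.
Open Scope R_scope.

Section MetricDefs.
Context {X : Type} (d : X -> X -> R).

Definition is_metric : Prop :=
  (forall x y, 0 <= d x y) /\
  (forall x y, d x y = 0 <-> x = y) /\
  (forall x y, d x y = d y x) /\
  (forall x y z, d x z <= d x y + d y z).

Definition is_open (U : X -> Prop) : Prop :=
  forall x, U x -> exists eps, eps > 0 /\ forall y, d x y < eps -> U y.

Definition compact_space : Prop :=
  forall (I : Type) (U : I -> X -> Prop),
    (forall i, is_open (U i)) -> (forall x, exists i, U i x) ->
    exists l : list I, forall x, exists i, In i l /\ U i x.

Definition continuous_map (f : X -> X) : Prop :=
  forall x eps, eps > 0 -> exists delta, delta > 0 /\
    forall y, d x y < delta -> d (f x) (f y) < eps.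

Definition homeomorphism (f g : X -> X) : Prop :=
  continuous_map f /\ continuous_map g /\
  (forall x, g (f x) = x) /\ (forall x, f (g x) = x).

(* forward and integer iterates; g plays the role of f^{-1} *)
Definition iter_n (f : X -> X) (n : nat) : X -> X := Nat.iter n f.

Definition iter_z (f g : X -> X) (z : Z) : X -> X :=
  match z with
  | Z0 => fun x => x
  | Zpos p => iter_n f (Pos.to_nat p)
  | Zneg p => iter_n g (Pos.to_nat p)
  end.

(* non-wandering points: every neighbourhood U of x meets f^n(U), some n >= 1 *)
Definition nonwandering (f : X -> X) (x : X) : Prop :=
  forall eps, eps > 0 -> exists (n : nat) (y : X),
    (n >= 1)%nat /\ d x y < eps /\ d x (iter_n f n y) < eps.

Definition expansive_on_nonwandering (f g : X -> X) (c : R) : Prop :=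
  c > 0 /\
  forall x y, nonwandering f x -> nonwandering f y -> x <> y ->
    exists n : Z, d (iter_z f g n x) (iter_z f g n y) > c.

Definition local_stable (f : X -> X) (c : R) (x y : X) : Prop :=
  forall n : nat, d (iter_n f n x) (iter_n f n y) <= c.

Definition local_unstable (g : X -> X) (c : R) (x y : X) : Prop :=
  forall n : nat, d (iter_n g n x) (iter_n g n y) <= c.

Definition stable_set (f : X -> X) (x y : X) : Prop :=
  Un_cv (fun n => d (iter_n f n x) (iter_n f n y)) 0.

Definition unstable_set (g : X -> X) (x y : X) : Prop :=
  Un_cv (fun n => d (iter_n g n x) (iter_n g n y)) 0.

End MetricDefs.

(* Main.v *)
Require Import Defs.
From Stdlib Require Import Reals List ZArith Lra Lia Classical.
Open Scope R_scope.

Lemma ball_open {X} (d : X -> X -> R) p e : is_metric d -> is_open d (fun y => d p y < e).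
Proof.
  intros [H0 [H1 [H2 H3]]] y Hy. exists (e - d p y). split; [lra|].
  intros z Hz. specialize (H3 p y z). lra.
Qed.

Lemma list_bound {I : Type} (E : I -> R) (Nf : I -> nat) (l : list I) :
  (forall i, E i > 0) ->
  exists e N, e > 0 /\ forall i, In i l -> e <= E i /\ (Nf i <= N)%nat.
Proof.
  intros HE. induction l as [|a l IH].
  - exists 1, 0%nat. split; [lra|]. intros i [].
  - destruct IH as [e [N [He H]]]. exists (Rmin e (E a)), (Nat.max N (Nf a)).
    split. { apply Rmin_pos; [exact He|exact (HE a)]. }
    intros i [<-|Hi].
    + split; [apply Rmin_r|lia].
    + destruct (H i Hi). split; [pose proof (Rmin_l e (E a)); lra|lia].
Qed.

Lemma cluster {X} (d : X -> X -> R) (a : nat -> X) (T : R -> nat -> Prop) :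
  is_metric d -> compact_space d ->
  (forall e e' n, 0 < e -> e <= e' -> T e n -> T e' n) ->
  (forall e, e > 0 -> forall N, exists n, (n >= N)%nat /\ T e n) ->
  exists p, forall e, e > 0 -> forall N, exists n, (n >= N)%nat /\ T e n /\ d p (a n) < e.
Proof.
  intros Hm Hc Tmono Tfreq. apply NNPP; intro H.
  set (I := {p : X & {e : R & {N : nat | e > 0 /\ forall n, (n >= N)%nat -> T e n -> d p (a n) >= e}}}).
  set (U := fun (i : I) x => d (projT1 i) x < projT1 (projT2 i)).
  destruct (Hc I U) as [l Hl].
  - intros i. apply ball_open; auto.
  - intros x. assert (Hx := not_ex_all_not _ _ H x).
    apply not_all_ex_not in Hx as [e He]. apply imply_to_and in He as [He1 He2].
    apply not_all_ex_not in He2 as [N HN].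
    assert (Hp : e > 0 /\ forall n, (n >= N)%nat -> T e n -> d x (a n) >= e).
    { split; auto. intros n Hn HT. apply Rnot_lt_ge. intro Hlt.
      apply HN. exists n. auto. }
    exists (existT _ x (existT _ e (exist _ N Hp))). unfold U; simpl.
    destruct Hm as [_ [H1 _]]. rewrite (proj2 (H1 x x) eq_refl). lra.
  - destruct (list_bound (fun i : I => projT1 (projT2 i)) (fun i : I => proj1_sig (projT2 (projT2 i))) l)
      as [e [N [He HB]]].
    { intros [p [e0 [N0 [He0 HP0]]]]. simpl. exact He0. }
    destruct (Tfreq e He N) as [n [Hn HT]].
    destruct (Hl (a n)) as [i [Hi Ui]].
    destruct (HB i Hi) as [B1 B2]. unfold U in Ui.
    clear Hi; destruct i as [p [e' [N' [He' HP]]]]. simpl in *.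
    assert (T e' n) by (apply (Tmono e); auto).
    specialize (HP n ltac:(lia) H0). lra.
Qed.

Definition clus {X} (d : X -> X -> R) (a : nat -> X) p :=
  forall e, e > 0 -> forall N, exists n, (n >= N)%nat /\ d p (a n) < e.

Lemma core {X} (d : X -> X -> R) (h : Z -> X -> X) (a b : nat -> X) (c : R) (NW : X -> Prop) :
  is_metric d -> compact_space d ->
  (forall m, continuous_map d (h m)) ->
  (forall m, exists N, forall n, (n >= N)%nat -> d (h m (a n)) (h m (b n)) <= c) ->
  (forall p, clus d a p -> NW p) -> (forall p, clus d b p -> NW p) ->
  (forall p q, NW p -> NW q -> p <> q -> exists m, d (h m p) (h m q) > c) ->
  Un_cv (fun n => d (a n) (b n)) 0.
Proof.
  intros Hm Hc Hh Hab Hna Hnb Hexp. apply NNPP; intro Hn.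
  assert (Hm' := Hm). destruct Hm' as [D0 [D1 [D2 D3]]].
  assert (exists eps, eps > 0 /\ forall N, exists n, (n >= N)%nat /\ d (a n) (b n) >= eps) as [eps [Heps Hf]].
  { unfold Un_cv in Hn. apply not_all_ex_not in Hn as [eps Heps].
    apply imply_to_and in Heps as [Heps H2]. exists eps; split; auto. intro N.
    assert (H3 := not_ex_all_not _ _ H2 N). apply not_all_ex_not in H3 as [n Hn3].
    apply imply_to_and in Hn3 as [Hn1 Hn3]. exists n; split; auto.
    unfold R_dist in Hn3. rewrite Rminus_0_r, Rabs_pos_eq in Hn3 by apply D0. lra. }
  destruct (cluster d a (fun _ n => d (a n) (b n) >= eps) Hm Hc) as [p Hp].
  { auto. } { intros. apply Hf. }
  destruct (cluster d b (fun e n => d (a n) (b n) >= eps /\ d p (a n) < e) Hm Hc) as [q Hq].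
  { intros e e' n H1 H2 [H3 H4]. split; auto. lra. }
  { intros e He N. destruct (Hp e He N) as [n [H1 [H2 H3]]]. exists n. auto. }
  assert (Hpq : p <> q).
  { intro E; subst q. destruct (Hq (eps/2) ltac:(lra) 0%nat) as [n [_ [[H1 H2] H3]]].
    specialize (D3 (a n) p (b n)). rewrite (D2 (a n) p) in D3. lra. }
  assert (NWp : NW p).
  { apply Hna. intros e He N. destruct (Hq e He N) as [n [H1 [[H2 H3] H4]]]. eauto. }
  assert (NWq : NW q).
  { apply Hnb. intros e He N. destruct (Hq e He N) as [n [H1 [[H2 H3] H4]]]. eauto. }
  destruct (Hexp p q NWp NWq Hpq) as [m Hmc].
  destruct (Hab m) as [N0 HN0].
  set (del := d (h m p) (h m q) - c).
  destruct (Hh m p (del/2) ltac:(unfold del; lra)) as [r1 [Hr1 C1]].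
  destruct (Hh m q (del/2) ltac:(unfold del; lra)) as [r2 [Hr2 C2]].
  destruct (Hq (Rmin r1 r2) (Rmin_pos _ _ Hr1 Hr2) N0) as [n [Hn0 [[_ Hpa] Hqb]]].
  pose proof (Rmin_l r1 r2). pose proof (Rmin_r r1 r2).
  specialize (C1 (a n) ltac:(lra)). specialize (C2 (b n) ltac:(lra)).
  specialize (HN0 n Hn0).
  pose proof (D3 (h m p) (h m (a n)) (h m q)).
  pose proof (D3 (h m (a n)) (h m (b n)) (h m q)).
  rewrite (D2 (h m (b n)) (h m q)) in H2. unfold del in *. lra.
Qed.

Lemma iter_add {X} (f : X -> X) n m x : iter_n f (n + m) x = iter_n f n (iter_n f m x).
Proof. induction n; unfold iter_n in *; simpl; congruence. Qed.

Lemma iter_Sr {X} (f : X -> X) n x : iter_n f (S n) x = iter_n f n (f x).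
Proof. rewrite <- Nat.add_1_r, iter_add. reflexivity. Qed.

Lemma iter_cancel {X} (f g : X -> X) k x : (forall y, g (f y) = y) ->
  iter_n g k (iter_n f k x) = x.
Proof.
  intro H. induction k. reflexivity.
  rewrite iter_Sr. change (iter_n f (S k) x) with (f (iter_n f k x)). rewrite H. exact IHk.
Qed.

Lemma cont_comp {X} (d : X -> X -> R) f g : continuous_map d f -> continuous_map d g ->
  continuous_map d (fun x => f (g x)).
Proof.
  intros Hf Hg x eps He. destruct (Hf (g x) eps He) as [d1 [Hd1 H1]].
  destruct (Hg x d1 Hd1) as [d2 [Hd2 H2]]. exists d2. split; auto.
Qed.

Lemma cont_iter {X} (d : X -> X -> R) f n : continuous_map d f -> continuous_map d (iter_n f n).
Proof.
  intro Hf. induction n.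
  - intros x e He. exists e. split; auto.
  - apply (cont_comp d f (iter_n f n)); auto.
Qed.

Lemma cont_iterz {X} (d : X -> X -> R) f g m : continuous_map d f -> continuous_map d g ->
  continuous_map d (iter_z f g m).
Proof.
  intros Hf Hg. destruct m; simpl.
  - intros x e He. exists e. split; auto.
  - apply cont_iter; auto.
  - apply cont_iter; auto.
Qed.

Lemma shift_s {X} (f g : X -> X) m : (forall y, g (f y) = y) ->
  exists N, forall n, (n >= N)%nat -> exists j, forall z, iter_z f g m (iter_n f n z) = iter_n f j z.
Proof.
  intro H. destruct m as [|p|p]; simpl.
  - exists 0%nat. intros n _. exists n. auto.
  - exists 0%nat. intros n _. exists (Pos.to_nat p + n)%nat. intro z. rewrite iter_add. auto.
  - exists (Pos.to_nat p). intros n Hn. exists (n - Pos.to_nat p)%nat. intro z.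
    replace n with (Pos.to_nat p + (n - Pos.to_nat p))%nat at 1 by lia.
    rewrite iter_add. apply iter_cancel. auto.
Qed.

Lemma shift_u {X} (f g : X -> X) m : (forall y, f (g y) = y) ->
  exists N, forall n, (n >= N)%nat -> exists j, forall z, iter_z f g m (iter_n g n z) = iter_n g j z.
Proof.
  intro H. destruct m as [|p|p]; simpl.
  - exists 0%nat. intros n _. exists n. auto.
  - exists (Pos.to_nat p). intros n Hn. exists (n - Pos.to_nat p)%nat. intro z.
    replace n with (Pos.to_nat p + (n - Pos.to_nat p))%nat at 1 by lia.
    rewrite iter_add. apply iter_cancel. auto.
  - exists 0%nat. intros n _. exists (Pos.to_nat p + n)%nat. intro z. rewrite iter_add. auto.
Qed.

Lemma nw_s {X} (d : X -> X -> R) f x p : clus d (fun n => iter_n f n x) p -> nonwandering d f p.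
Proof.
  intros Hp eps He. destruct (Hp eps He 0%nat) as [n1 [_ H1]].
  destruct (Hp eps He (S n1)) as [n2 [Hn2 H2]].
  exists (n2 - n1)%nat, (iter_n f n1 x). split; [lia|]. split; auto.
  rewrite <- iter_add. replace (n2 - n1 + n1)%nat with n2 by lia. auto.
Qed.

Lemma nw_u {X} (d : X -> X -> R) f g x p : (forall y, f (g y) = y) ->
  clus d (fun n => iter_n g n x) p -> nonwandering d f p.
Proof.
  intros H Hp eps He. destruct (Hp eps He 0%nat) as [n1 [_ H1]].
  destruct (Hp eps He (S n1)) as [n2 [Hn2 H2]].
  exists (n2 - n1)%nat, (iter_n g n2 x). split; [lia|]. split; auto.
  replace n2 with (n2 - n1 + n1)%nat at 2 by lia.
  rewrite iter_add, iter_cancel; auto.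
Qed.

Theorem mainTheorem14 (X : Type) (d : X -> X -> R) (f g : X -> X) (c : R) :
  is_metric d -> compact_space d -> homeomorphism d f g ->
  expansive_on_nonwandering d f g c ->
  forall x : X,
    (forall y, local_stable d f c x y -> stable_set d f x y) /\
    (forall y, local_unstable d g c x y -> unstable_set d g x y).
Proof.
  intros Hm Hc [Hf [Hg [Hgf Hfg]]] [Hcpos Hexp] x. split.
  - intros y Hy. unfold stable_set.
    apply (core d (iter_z f g) (fun n => iter_n f n x) (fun n => iter_n f n y) c (nonwandering d f)); auto.
    + intro m. apply cont_iterz; auto.
    + intro m. destruct (shift_s f g m Hgf) as [N HN]. exists N. intros n Hn.
      destruct (HN n Hn) as [j Hj]. rewrite !Hj. apply Hy.
    + intros p Hp. eapply nw_s; eauto.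
    + intros p Hp. eapply nw_s; eauto.
  - intros y Hy. unfold unstable_set.
    apply (core d (iter_z f g) (fun n => iter_n g n x) (fun n => iter_n g n y) c (nonwandering d f)); auto.
    + intro m. apply cont_iterz; auto.
    + intro m. destruct (shift_u f g m Hfg) as [N HN]. exists N. intros n Hn.
      destruct (HN n Hn) as [j Hj]. rewrite !Hj. apply Hy.
    + intros p Hp. eapply nw_u; eauto.
    + intros p Hp. eapply nw_u; eauto.
Qed.
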